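(* Consider the following random process producing a new population (clade) of finite surreal forms from an existing finite population $\mathcal{C}$ of finite surreal forms. To create each member of the new clade independently: draw a number of parents $n_p \sim \mathrm{Poisson}(\lambda)$ with $\lambda>0$; select $n_p$ surreal forms from $\mathcal{C}$, each chosen independently with probability proportional to $w_{g(x)}$, where $(w_k)_{k\ge0}$ is a non-negative weighting depending only on the generation; sort the chosen parents into an ordered list $P$; choose a split point $s\in\{0,\dots,n_p\}$ from a split distribution $D_s(n_p)$; and set $x=\{X_L\mid X_R\}$ with $X_L=\{P[1],\dots,P[s]\}$ and $X_R=\{P[s+1],\dots,P[n_p]\}$ (each empty when the index range is empty). Let $g_k$ denote the proportion of members of $\mathcal{C}$ with generation $k$, let $Z=\sum_{i\ge0} g_i w_i$ (assumed positive), $z_k=g_k w_k/Z$ and $Z_k=\sum_{i=0}^k z_i$. Then for every $k\ge0$, the generation distribution of the new clade has CDF $$G'_{k+1} = e^{\lambda(Z_k-1)},$$ i.e. a member $x'$ of the new clade satisfies $\Pr[g(x')\le k+1]=e^{\lambda(Z_k-1)}$.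
   Context: A (short) surreal form is $x=\{X_L\mid X_R\}$ where $X_L,X_R$ are finite (possibly empty) sets of previously constructed surreal forms such that no element of $X_R$ is $\le$ any element of $X_L$; the base form is $\bar 0=\{\emptyset\mid\emptyset\}$. The elements of $X_L\cup X_R$ are the parents of $x$. The generation is defined by $g(\bar 0)=0$ and $g(x)=1+\max_{p\in X_L\cup X_R} g(p)$. *)

(* Defs.v *)
From Stdlib Require Import Reals List Permutation Arith.
From Coquelicot Require Import Coquelicot.
Import ListNotations.
Open Scope R_scope.

(** Finite (pre-)forms {X_L | X_R}: finite sets of parents are represented by
    finite lists (duplicates are harmless for every notion used here). *)
Inductive form : Type := Form : list form -> list form -> form.

Fixpoint gen (x : form) : nat :=
  match x with
  | Form L R =>
      Nat.max (fold_right Nat.max 0%nat (map (fun p => S (gen p)) L))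
              (fold_right Nat.max 0%nat (map (fun p => S (gen p)) R))
  end.

Definition lsum {A : Type} (f : A -> R) (l : list A) : R :=
  fold_right Rplus 0 (map f l).

Definition lprod {A : Type} (f : A -> R) (l : list A) : R :=
  fold_right Rmult 1 (map f l).

(** All lists of length n with entries in {0,...,N-1} (ordered draws of indices). *)
Fixpoint tuples (N n : nat) : list (list nat) :=
  match n with
  | O => [[]]
  | S m => flat_map (fun i => map (cons i) (tuples N m)) (seq 0 N)
  end.

Definition poisson (lam : R) (n : nat) : R := exp (- lam) * lam ^ n / INR (fact n).

(** Default form (the base form 0bar), used only for out-of-range nth. *)
Definition zero_form : form := Form [] [].

Definition Wtot (w : nat -> R) (C : list form) : R := lsum (fun c => w (gen c)) C.

Definition sel (w : nat -> R) (C : list form) (i : nat) : R :=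
  w (gen (nth i C zero_form)) / Wtot w C.

Definition new_form (srt : list form -> list form) (C : list form)
  (t : list nat) (s : nat) : form :=
  let P := srt (map (fun i => nth i C zero_form) t) in
  Form (firstn s P) (skipn s P).

(** Probability, in the new clade, of the event g(x') <= m:
    sum over n_p ~ Poisson(lam), ordered parent draws, and split s ~ D n_p. *)
Definition term_gen_le (lam : R) (w : nat -> R) (D : nat -> nat -> R)
  (srt : list form -> list form) (C : list form) (m : nat) (n : nat) : R :=
  poisson lam n *
  lsum (fun t => lprod (sel w C) t *
                 sum_f_R0 (fun s => D n s *
                    (if Nat.leb (gen (new_form srt C t s)) m then 1 else 0)) n)
       (tuples (length C) n).

Definition gprop (C : list form) (k : nat) : R :=
  INR (count_occ Nat.eq_dec (map gen C) k) / INR (length C).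

Definition maxgen (C : list form) : nat := fold_right Nat.max 0%nat (map gen C).

(** Z = sum_{i>=0} g_i w_i  (the terms vanish for i > maxgen C). *)
Definition Zsum (w : nat -> R) (C : list form) : R :=
  sum_f_R0 (fun i => gprop C i * w i) (maxgen C).

Definition zk (w : nat -> R) (C : list form) (k : nat) : R :=
  gprop C k * w k / Zsum w C.

Definition Zk (w : nat -> R) (C : list form) (k : nat) : R :=
  sum_f_R0 (zk w C) k.

(* Main.v *)
Require Import Defs.
From Stdlib Require Import Reals List Permutation Arith.
From Coquelicot Require Import Coquelicot.
From Stdlib Require Import Lia Lra.
Open Scope R_scope.

Definition mx (l : list form) : nat := fold_right Nat.max 0%nat (map (fun p => S (gen p)) l).

Lemma mx_le (k : nat) (l : list form) :
  (mx l <= S k)%nat <-> (forall p, In p l -> (gen p <= k)%nat).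
Proof.
  unfold mx; induction l as [|a l IH]; cbn [map fold_right In].
  - split; [intros _ p []| lia].
  -  split.
    + intros H p [<-|Hp]. lia. apply IH; [lia| exact Hp].
    + intros H. assert (gen a <= k)%nat by (apply H; auto).
      assert (fold_right Nat.max 0%nat (map (fun p => S (gen p)) l) <= S k)%nat
        by (apply IH; intros; apply H; auto). lia.
Qed.

Lemma gen_new_form_leb (srt : list form -> list form) (C : list form) t s k :
  (forall l, Permutation (srt l) l) ->
  Nat.leb (gen (new_form srt C t s)) (S k) =
  forallb (fun i => Nat.leb (gen (nth i C zero_form)) k) t.
Proof.
  intros Hs. apply Bool.eq_iff_eq_true. rewrite Nat.leb_le, forallb_forall.
  unfold new_form.
  set (P := srt (map (fun i => nth i C zero_form) t)).
  change (gen (Form (firstn s P) (skipn s P))) with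
    (Nat.max (mx (firstn s P)) (mx (skipn s P))).
  assert (HP : forall p, In p P <-> In p (map (fun i => nth i C zero_form) t)).
  { intro p; split; apply Permutation_in; [|apply Permutation_sym]; apply Hs. }
  split.
  - intros H i Hi. apply Nat.leb_le.
    assert (Hin : In (nth i C zero_form) P) by (apply HP, (in_map (fun i => nth i C zero_form)), Hi).
    rewrite <- (firstn_skipn s P) in Hin. apply in_app_or in Hin.
    destruct Hin as [Hin|Hin].
    + apply (proj1 (mx_le k (firstn s P))) ; [lia | exact Hin].
    + apply (proj1 (mx_le k (skipn s P))) ; [lia | exact Hin].
  - intros H.
    assert (Hall : forall p, In p P -> (gen p <= k)%nat).
    { intros p Hp. apply HP, in_map_iff in Hp. destruct Hp as [i [<- Hi]].
      apply Nat.leb_le, H, Hi. }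
    assert (mx (firstn s P) <= S k)%nat.
    { apply mx_le. intros p Hp. apply Hall.
      rewrite <- (firstn_skipn s P). apply in_or_app; auto. }
    assert (mx (skipn s P) <= S k)%nat.
    { apply mx_le. intros p Hp. apply Hall.
      rewrite <- (firstn_skipn s P). apply in_or_app; auto. }
    lia.
Qed.

Definition ind1 (C : list form) (k : nat) (i : nat) : R :=
  if Nat.leb (gen (nth i C zero_form)) k then 1 else 0.

Lemma ind_lprod C k t :
  (if forallb (fun i => Nat.leb (gen (nth i C zero_form)) k) t then 1 else 0)
  = lprod (ind1 C k) t.
Proof.
  induction t as [|a t IH]; simpl; [reflexivity|].
  unfold lprod in *; simpl. rewrite <- IH. unfold ind1.
  destruct (Nat.leb _ k); destruct (forallb _ t); simpl; ring.
Qed.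

Lemma lprod_mult {A} (f g : A -> R) t :
  lprod f t * lprod g t = lprod (fun i => f i * g i) t.
Proof. induction t; unfold lprod in *; simpl; [ring|]. rewrite <- IHt; ring. Qed.

Lemma lsum_app {A} (f : A -> R) l1 l2 : lsum f (l1 ++ l2) = lsum f l1 + lsum f l2.
Proof. induction l1; unfold lsum in *; simpl; [ring|]. rewrite IHl1; ring. Qed.

Lemma lsum_scal {A} (f : A -> R) c l : lsum (fun x => c * f x) l = c * lsum f l.
Proof. induction l; unfold lsum in *; simpl; [ring|]. rewrite IHl; ring. Qed.

Lemma lsum_ext {A} (f g : A -> R) l : (forall x, f x = g x) -> lsum f l = lsum g l.
Proof. intros H; induction l; unfold lsum in *; simpl; [ring|]. rewrite IHl, H; ring. Qed.

Lemma lsum_map {A B} (f : B -> R) (h : A -> B) l : lsum f (map h l) = lsum (fun x => f (h x)) l.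
Proof. unfold lsum. rewrite map_map. reflexivity. Qed.

Lemma lsum_tuples (g : nat -> R) N n :
  lsum (lprod g) (tuples N n) = (lsum g (seq 0 N)) ^ n.
Proof.
  induction n as [|n IH]; simpl.
  - unfold lsum, lprod; simpl; ring.
  - assert (Hg : forall l, lsum (lprod g) (flat_map (fun i => map (cons i) (tuples N n)) l)
                = lsum g l * lsum g (seq 0 N) ^ n).
    { intro l. induction l as [|a l IHl]; simpl.
      + unfold lsum; simpl; ring.
      + rewrite lsum_app, IHl, lsum_map.
        rewrite (lsum_ext _ (fun x => g a * lprod g x)) by (intro; unfold lprod; reflexivity).
        rewrite lsum_scal, IH. unfold lsum; simpl. ring. }
    rewrite Hg. ring.
Qed.

Lemma lsum_nth (h : form -> R) C :
  lsum (fun i => h (nth i C zero_form)) (seq 0 (length C)) = lsum h C.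
Proof.
  induction C as [|c C IH]; [reflexivity|].
  simpl length. rewrite <- cons_seq, <- seq_shift.
  unfold lsum. simpl. rewrite map_map. simpl. fold (lsum h C). rewrite <- IH. unfold lsum. reflexivity.
Qed.

Definition indR (b : bool) : R := if b then 1 else 0.

Lemma sum_ind (f : nat -> R) g K :
  sum_f_R0 (fun j => (if Nat.eq_dec g j then 1 else 0) * f j) K =
  indR (Nat.leb g K) * f g.
Proof.
  induction K as [|K IH]; simpl.
  - unfold indR. destruct (Nat.eq_dec g 0); destruct (Nat.leb g 0) eqn:E;
    try (apply Nat.leb_le in E); try (apply Nat.leb_gt in E); subst; try lia; simpl; ring.
  - rewrite IH. unfold indR.
    destruct (Nat.eq_dec g (S K)) as [e|e].
    + subst. rewrite (proj2 (Nat.leb_gt _ _)) by lia.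
      rewrite (proj2 (Nat.leb_le _ _)) by lia. ring.
    + destruct (Nat.leb g K) eqn:E; destruct (Nat.leb g (S K)) eqn:E2;
      try (apply Nat.leb_le in E); try (apply Nat.leb_gt in E);
      try (apply Nat.leb_le in E2); try (apply Nat.leb_gt in E2); try lia; ring.
Qed.

Lemma count_sum (w : nat -> R) C K :
  sum_f_R0 (fun j => INR (count_occ Nat.eq_dec (map gen C) j) * w j) K =
  lsum (fun c => indR (Nat.leb (gen c) K) * w (gen c)) C.
Proof.
  induction C as [|c C IH]; simpl.
  - unfold lsum; simpl. induction K; simpl; [ring|]. rewrite IHK; ring.
  - unfold lsum; simpl. fold (lsum (fun c => indR (Nat.leb (gen c) K) * w (gen c)) C).
    rewrite <- IH, <- sum_ind, <- sum_plus. apply sum_eq. intros j _.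
    destruct (Nat.eq_dec (gen c) j); [rewrite S_INR|]; ring.
Qed.

Lemma le_maxgen C c : In c C -> (gen c <= maxgen C)%nat.
Proof.
  unfold maxgen; induction C as [|a C IH]; cbn [map fold_right In]; [tauto|].
  intros [<-|H]; [lia|]. specialize (IH H). lia.
Qed.

Lemma lsum_ext_in {A} (f g : A -> R) l : (forall x, In x l -> f x = g x) -> lsum f l = lsum g l.
Proof. intros H; induction l; unfold lsum in *; simpl; [ring|].
  rewrite IHl, H; simpl; auto. intros; apply H; simpl; auto. Qed.

Lemma Zk_eq (w : nat -> R) C k :
  (0 < length C)%nat -> 0 < Zsum w C ->
  Zk w C k = lsum (fun c => indR (Nat.leb (gen c) k) * w (gen c)) C / Wtot w C.
Proof.
  intros HN HZ.
  assert (HNr : 0 < INR (length C)) by (apply lt_0_INR; exact HN).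
  assert (Hsum : forall K, sum_f_R0 (fun j => gprop C j * w j) K =
     / INR (length C) * lsum (fun c => indR (Nat.leb (gen c) K) * w (gen c)) C).
  { intro K. unfold gprop.
    rewrite (sum_eq _ (fun j => (INR (count_occ Nat.eq_dec (map gen C) j) * w j) * / INR (length C)))
      by (intros; unfold Rdiv; ring).
    rewrite <- scal_sum, count_sum. reflexivity. }
  assert (HW : Zsum w C = / INR (length C) * Wtot w C).
  { unfold Zsum. rewrite Hsum. unfold Wtot. f_equal. apply lsum_ext_in.
    intros c Hc. rewrite (proj2 (Nat.leb_le _ _)) by (apply le_maxgen; exact Hc).
    unfold indR; ring. }
  assert (HWp : 0 < Wtot w C).
  { assert (Wtot w C = INR (length C) * Zsum w C) by (rewrite HW; field; lra).
    rewrite H. apply Rmult_lt_0_compat; assumption. }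
  unfold Zk, zk.
  rewrite (sum_eq _ (fun j => (gprop C j * w j) * / Zsum w C)) by (intros; unfold Rdiv; ring).
  rewrite <- scal_sum, Hsum, HW. field. split; lra.
Qed.

Theorem theorem1 (lam : R) (w : nat -> R) (D : nat -> nat -> R)
  (srt : list form -> list form) (C : list form) :
  0 < lam ->
  (forall i, 0 <= w i) ->
  (0 < length C)%nat ->
  0 < Zsum w C ->
  (forall n s, (s <= n)%nat -> 0 <= D n s) ->
  (forall n, sum_f_R0 (D n) n = 1) ->
  (forall l, Permutation (srt l) l) ->
  forall k : nat,
    is_series (term_gen_le lam w D srt C (S k)) (exp (lam * (Zk w C k - 1))).
Proof.
  intros Hlam Hw HN HZ HD HD1 Hsrt k.
  set (q := lsum (fun i => sel w C i * ind1 C k i) (seq 0 (length C))).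
  assert (Hterm : forall n, term_gen_le lam w D srt C (S k) n =
                  exp (- lam) * (/ INR (fact n) * (lam * q) ^ n)).
  { intro n. unfold term_gen_le.
    rewrite (lsum_ext _ (lprod (fun i => sel w C i * ind1 C k i))).
    - rewrite lsum_tuples. fold q. unfold poisson. rewrite Rpow_mult_distr. unfold Rdiv. ring.
    - intro t. rewrite (sum_eq _ (fun s => D n s * lprod (ind1 C k) t)).
      + rewrite <- scal_sum, HD1, Rmult_1_r, lprod_mult. reflexivity.
      + intros s _. rewrite gen_new_form_leb by exact Hsrt. rewrite ind_lprod. reflexivity. }
  assert (Hq : q = Zk w C k).
  { rewrite Zk_eq by assumption. unfold q, sel, ind1.
    rewrite (lsum_ext _ (fun i => (fun c => indR (Nat.leb (gen c) k) * w (gen c)) (nth i C zero_form) * / Wtot w C))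
      by (intro; unfold indR, Rdiv; destruct (Nat.leb _ _); ring).
    rewrite (lsum_nth (fun c => indR (Nat.leb (gen c) k) * w (gen c) * / Wtot w C)).
    rewrite (lsum_ext (fun c => indR (Nat.leb (gen c) k) * w (gen c) * / Wtot w C) (fun c => / Wtot w C * (indR (Nat.leb (gen c) k) * w (gen c))))
      by (intro; ring).
    rewrite lsum_scal. unfold Rdiv. ring. }
  rewrite <- Hq.
  assert (He : forall n, / INR (fact n) * (lam * q) ^ n * exp (- lam) = term_gen_le lam w D srt C (S k) n).
  { intro n. rewrite Hterm. ring. }
  apply (is_series_ext _ _ _ He).
  replace (exp (lam * (q - 1))) with (exp (lam * q) * exp (- lam)).
  2:{ rewrite <- exp_plus. f_equal. ring. }
  apply is_series_scal_r. apply is_pseries_R. apply is_exp_Reals.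
Qed.
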